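(* Let $V$ be a commutative unital quantale whose underlying lattice is a frame and in which $k=\top$. Let $(X,a)$, $(Y,b)$ be $V$-groups, $\varphi\colon Y\to\mathrm{Aut}(X)$ a group action, and $c$ a $V$-category structure on the semidirect product group $X\rtimes_\varphi Y$ such that \[(X,a)\xrightarrow{\langle 1,0\rangle}(X\rtimes_\varphi Y,c)\underset{\langle 0,1\rangle}{\overset{\pi_2}{\rightleftarrows}}(Y,b)\] is a split extension in $\mathsf{VGrp}$. Then for every $y\in Y$ the map $\varphi_y\colon(X,a)\to(X,a)$ is a $V$-functor.
   Context: A commutative unital quantale $V$ is a complete lattice with a commutative associative operation $\otimes$ with unit $k$ preserving arbitrary joins in each variable. A $V$-category $(X,a)$: $a\colon X\times X\to V$ with $k\le a(x,x)$ and $a(x,x')\otimes a(x',x'')\le a(x,x'')$; a $V$-functor is a map $f$ with $a(x,x')\le b(f(x),f(x'))$. A $V$-group $(X,a,+)$ is a $V$-category with a group structure (additive, not necessarily abelian) such that $a(x_1,x_2)\otimes a(x_1',x_2')\le a(x_1+x_1',x_2+x_2')$; $V$-homomorphisms are group homomorphisms that are $V$-functors; category $\mathsf{VGrp}$ (pointed since $k=\top$). The semidirect product $X\rtimes_\varphi Y$ is $X\times Y$ with $(x,y)+(x',y')=(x+\varphi_y(x'),y+y')$, where $\varphi_y=\varphi(y)$; $\langle 1,0\rangle(x)=(x,0)$, $\langle 0,1\rangle(y)=(0,y)$, $\pi_2(x,y)=y$. The diagram being a split extension in $\mathsf{VGrp}$ means: all three maps are $V$-homomorphisms, $\pi_2\circ\langle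 0,1\rangle=1_Y$, and $\langle 1,0\rangle$ is a kernel of $\pi_2$ in $\mathsf{VGrp}$ (equivalently, additionally $a(x,x')=c((x,0),(x',0))$ for all $x,x'\in X$). *)

(* Defs.v *)
Set Implicit Arguments.

(** Commutative unital quantale: complete lattice (order + arbitrary sups),
    commutative associative tensor with unit [qk], preserving arbitrary
    joins (in the second variable; by commutativity in both). *)
Record quantale := Quantale {
  qcar :> Type;
  qle : qcar -> qcar -> Prop;
  qsup : (qcar -> Prop) -> qcar;
  qten : qcar -> qcar -> qcar;
  qk : qcar;
  qle_refl : forall u, qle u u;
  qle_trans : forall u v w, qle u v -> qle v w -> qle u w;
  qle_antisym : forall u v, qle u v -> qle v u -> u = v;
  qsup_ub : forall (S : qcar -> Prop) v, S v -> qle v (qsup S);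
  qsup_least : forall (S : qcar -> Prop) u,
      (forall v, S v -> qle v u) -> qle (qsup S) u;
  qten_assoc : forall u v w, qten u (qten v w) = qten (qten u v) w;
  qten_comm : forall u v, qten u v = qten v u;
  qten_unit : forall u, qten qk u = u;
  qten_sup : forall u (S : qcar -> Prop),
      qten u (qsup S) = qsup (fun w => exists s, S s /\ w = qten u s)
}.

Arguments qle {q}.
Arguments qsup {q}.
Arguments qten {q}.
Arguments qk {q}.

Definition qtop (V : quantale) : V := qsup (fun _ : V => True).
Definition qmeet {V : quantale} (u v : V) : V :=
  qsup (fun w => qle w u /\ qle w v).

Definition is_frame (V : quantale) : Prop :=
  forall (u : V) (S : V -> Prop),
    qmeet u (qsup S) = qsup (fun w => exists s, S s /\ w = qmeet u s).

Definition is_Vcat {V : quantale} (X : Type) (a : X -> X -> V) : Prop :=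
  (forall x, qle qk (a x x)) /\
  (forall x x' x'', qle (qten (a x x') (a x' x'')) (a x x'')).

Definition is_Vfunctor {V : quantale} (X Y : Type)
  (a : X -> X -> V) (b : Y -> Y -> V) (f : X -> Y) : Prop :=
  forall x x', qle (a x x') (b (f x) (f x')).

(** Groups (additive notation, not necessarily abelian). *)
Definition is_group (X : Type) (add : X -> X -> X) (zero : X) (opp : X -> X)
  : Prop :=
  (forall x y z, add x (add y z) = add (add x y) z) /\
  (forall x, add zero x = x) /\ (forall x, add x zero = x) /\
  (forall x, add (opp x) x = zero) /\ (forall x, add x (opp x) = zero).

Definition is_group_hom (X Y : Type) (addX : X -> X -> X) (addY : Y -> Y -> Y)
  (f : X -> Y) : Prop :=
  forall x x', f (addX x x') = addY (f x) (f x').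

Definition is_Vgroup {V : quantale} (X : Type) (a : X -> X -> V)
  (add : X -> X -> X) (zero : X) (opp : X -> X) : Prop :=
  is_Vcat a /\ is_group add zero opp /\
  (forall x1 x2 x1' x2',
      qle (qten (a x1 x2) (a x1' x2')) (a (add x1 x1') (add x2 x2'))).

Definition is_Vhom {V : quantale} (X Y : Type)
  (a : X -> X -> V) (addX : X -> X -> X) (b : Y -> Y -> V) (addY : Y -> Y -> Y)
  (f : X -> Y) : Prop :=
  is_group_hom addX addY f /\ is_Vfunctor a b f.

(** A group action of Y on X by automorphisms, i.e. a group homomorphism
    phi : Y -> Aut(X). *)
Definition is_aut (X : Type) (addX : X -> X -> X) (g : X -> X) : Prop :=
  is_group_hom addX addX g /\ (exists h : X -> X,
     (forall x, h (g x) = x) /\ (forall x, g (h x) = x)).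

Definition is_action (X Y : Type) (addX : X -> X -> X) (addY : Y -> Y -> Y)
  (phi : Y -> X -> X) : Prop :=
  (forall y, is_aut addX (phi y)) /\
  (forall y y' x, phi (addY y y') x = phi y (phi y' x)).

Definition sd_add (X Y : Type) (addX : X -> X -> X) (addY : Y -> Y -> Y)
  (phi : Y -> X -> X) (p q : X * Y) : X * Y :=
  (addX (fst p) (phi (snd p) (fst q)), addY (snd p) (snd q)).

Definition sd_zero (X Y : Type) (zeroX : X) (zeroY : Y) : X * Y :=
  (zeroX, zeroY).

Definition sd_opp (X Y : Type) (oppX : X -> X) (oppY : Y -> Y)
  (phi : Y -> X -> X) (p : X * Y) : X * Y :=
  (phi (oppY (snd p)) (oppX (fst p)), oppY (snd p)).

(** [k] is a kernel of [p] in VGrp (which is pointed, zero maps being the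
    constant maps to the neutral element): k is a V-homomorphism,
    p ∘ k = 0, and every V-homomorphism f into E with p ∘ f = 0 factors
    uniquely through k by a V-homomorphism. *)
Definition is_kernel_VGrp {V : quantale}
  (X : Type) (a : X -> X -> V) (addX : X -> X -> X)
  (E : Type) (c : E -> E -> V) (addE : E -> E -> E)
  (Y : Type) (zeroY : Y)
  (k : X -> E) (p : E -> Y) : Prop :=
  is_Vhom a addX c addE k /\
  (forall x, p (k x) = zeroY) /\
  (forall (Z : Type) (d : Z -> Z -> V) (addZ : Z -> Z -> Z) (zeroZ : Z)
          (oppZ : Z -> Z),
      is_Vgroup d addZ zeroZ oppZ ->
      forall f : Z -> E, is_Vhom d addZ c addE f ->
      (forall z, p (f z) = zeroY) ->
      exists! g : Z -> X, is_Vhom d addZ a addX g /\ (forall z, k (g z) = f z)).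

(* Main.v *)
Require Import Defs.

Lemma ten_mono_r (V : quantale) (u v w : V) : qle v w -> qle (qten u v) (qten u w).
Proof.
  intro Hvw.
  set (S := fun s : V => s = v \/ s = w).
  assert (E : w = qsup S).
  { apply qle_antisym.
    - apply qsup_ub. right; reflexivity.
    - apply qsup_least. intros s [-> | ->]; [exact Hvw | apply qle_refl]. }
  assert (H : qle (qten u v) (qten u (qsup S))).
  { rewrite qten_sup. apply qsup_ub. exists v. split; [left; reflexivity | reflexivity]. }
  rewrite <- E in H. exact H.
Qed.

Lemma ten_mono (V : quantale) (u u' v v' : V) :
  qle u u' -> qle v v' -> qle (qten u v) (qten u' v').
Proof.
  intros H1 H2. apply qle_trans with (qten u v').
  - apply ten_mono_r; exact H2.
  - rewrite (qten_comm V u), (qten_comm V u'). apply ten_mono_r; exact H1.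
Qed.

Theorem lemma7p1 (V : quantale) (Hframe : is_frame V) (Hk : qk = qtop V)
  (X : Type) (a : X -> X -> V) (addX : X -> X -> X) (zeroX : X) (oppX : X -> X)
  (Y : Type) (b : Y -> Y -> V) (addY : Y -> Y -> Y) (zeroY : Y) (oppY : Y -> Y)
  (HX : is_Vgroup a addX zeroX oppX)
  (HY : is_Vgroup b addY zeroY oppY)
  (phi : Y -> X -> X) (Hphi : is_action addX addY phi)
  (c : X * Y -> X * Y -> V)
  (Hc : is_Vgroup c (sd_add addX addY phi) (sd_zero zeroX zeroY)
                    (sd_opp oppX oppY phi))
  (Hpi2 : is_Vhom c (sd_add addX addY phi) b addY (@snd X Y))
  (Hin2 : is_Vhom b addY c (sd_add addX addY phi) (fun y => (zeroX, y)))
  (Hsplit : forall y : Y, @snd X Y (zeroX, y) = y)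
  (Hker : is_kernel_VGrp a addX c (sd_add addX addY phi) zeroY
            (fun x => (x, zeroY)) (@snd X Y)) :
  forall y : Y, is_Vfunctor a a (phi y).
Proof.
  destruct HX as [HXc [[Xa [X0l [X0r [XNl XNr]]]] HXt]].
  destruct HY as [HYc [[Ya [Y0l [Y0r [YNl YNr]]]] HYt]].
  destruct Hc as [[Ccr Cct] [_ Cten]].
  destruct Hphi as [Haut Hcomp].
  assert (Hphi0 : forall y, phi y zeroX = zeroX).
  { intro y. destruct (Haut y) as [Hh _].
    assert (E : phi y zeroX = addX (phi y zeroX) (phi y zeroX)).
    { rewrite <- Hh, X0l. reflexivity. }
    assert (E2 : addX (oppX (phi y zeroX)) (phi y zeroX)
               = addX (oppX (phi y zeroX)) (addX (phi y zeroX) (phi y zeroX))).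
    { rewrite <- E. reflexivity. }
    rewrite Xa, XNl, X0l in E2. symmetry; exact E2. }
  assert (HphiY0 : forall x, phi zeroY x = x).
  { intro x. destruct (Haut zeroY) as [_ [h [_ Hgh]]].
    pose proof (Hcomp zeroY zeroY (h x)) as E.
    rewrite Y0l, Hgh in E. symmetry; exact E. }
  assert (Hres : forall x x', qle (c (x, zeroY) (x', zeroY)) (a x x')).
  { destruct Hker as [_ [_ Huniv]].
    set (d := fun x x' : X => c (x, zeroY) (x', zeroY)).
    assert (Hd : is_Vgroup d addX zeroX oppX).
    { split; [split|split].
      - intro x; apply Ccr.
      - intros; apply Cct.
      - repeat split; auto.
      - intros x1 x2 x1' x2'. unfold d.
        pose proof (Cten (x1, zeroY) (x2, zeroY) (x1', zeroY) (x2', zeroY)) as T.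
        unfold sd_add in T; simpl in T. rewrite !HphiY0, Y0l in T. exact T. }
    assert (Hf : is_Vhom d addX c (sd_add addX addY phi) (fun x => (x, zeroY))).
    { split.
      - intros x x'. unfold sd_add; simpl. rewrite HphiY0, Y0l. reflexivity.
      - intros x x'. apply qle_refl. }
    destruct (Huniv X d addX zeroX oppX Hd _ Hf (fun z => eq_refl)) as [g [[[_ Hg] Hkg] _]].
    intros x x'.
    pose proof (Hg x x') as G. unfold d in G.
    assert (Eg : forall z, g z = z).
    { intro z. pose proof (Hkg z) as K. injection K. auto. }
    rewrite !Eg in G. exact G. }
  intros y x x'.
  destruct Hker as [[_ Hkf] _].
  destruct Hin2 as [_ Hin].
  assert (Hcy : forall y, qle qk (c (zeroX, y) (zeroX, y))).
  { intro y0. apply qle_trans with (b y0 y0). apply (proj1 HYc). apply Hin. }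
  set (p0 := (zeroX, y)).
  set (q0 := (zeroX, oppY y)).
  assert (Hconj : forall z, sd_add addX addY phi
                   (sd_add addX addY phi p0 (z, zeroY)) q0 = (phi y z, zeroY)).
  { intro z. unfold sd_add, p0, q0; simpl. rewrite Y0r, Hphi0, X0l, X0r, YNr. reflexivity. }
  apply qle_trans with (c (phi y x, zeroY) (phi y x', zeroY)); [| apply Hres].
  rewrite <- !Hconj.
  apply qle_trans with
    (qten (c (sd_add addX addY phi p0 (x, zeroY)) (sd_add addX addY phi p0 (x', zeroY)))
          (c q0 q0)); [| apply Cten].
  rewrite <- (qten_unit V (a x x')).
  rewrite (qten_comm V qk (a x x')).
  apply ten_mono; [| apply Hcy].
  rewrite <- (qten_unit V (a x x')).
  apply qle_trans with (qten (c p0 p0) (c (x, zeroY) (x', zeroY))); [| apply Cten].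
  apply ten_mono; [apply Hcy | apply Hkf].
Qed.
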